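(* Let $d\in\mathbb{N}$, $\kappa\in(0,\infty)$, and let $\mathfrak{l}\colon\mathbb{R}^d\times\mathbb{R}^d\to\mathbb{R}$ satisfy $\mathfrak{l}(\theta,\vartheta)=\frac{\kappa}{2}\|\theta-\vartheta\|^2$ for all $\theta,\vartheta\in\mathbb{R}^d$. Let $(\Omega,\mathcal{F},\mathbb{P})$ be a probability space, let $X_{n,m}\colon\Omega\to\mathbb{R}^d$, $n,m\in\mathbb{Z}$, be i.i.d. random variables with $\sup_{n,m\in\mathbb{Z}}\|X_{n,m}(\omega)\|<\infty$ for every $\omega\in\Omega$, let $M\in\mathbb{N}$, $\gamma\in(0,2/\kappa)$, let $\Theta\colon\mathbb{N}_0\times\Omega\to\mathbb{R}^d$ satisfy for all $n\in\mathbb{N}$ $$\Theta_n=\Theta_{n-1}-\frac{\gamma}{M}\Big[\sum_{m=1}^M(\nabla_\theta\mathfrak{l})(\Theta_{n-1},X_{n,m})\Big],$$ and let $k\in\mathbb{Z}$ satisfy $$\Theta_0=\sum_{n=0}^\infty\frac{\kappa\gamma(1-\kappa\gamma)^n}{M}\Big[\sum_{m=k+1}^{k+M}X_{-n,m}\Big].$$ Then $$\sup_{n\in\mathbb{N}_0}\|\Theta_n\|\le\frac{2}{2-\kappa\gamma}\Big[\sup_{v,w\in\mathbb{Z}}\|X_{v,w}\|\Big].$$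
   Context: $\|\cdot\|$ is the Euclidean norm; $\nabla_\theta\mathfrak{l}$ is the gradient in the first argument. *)

(* Defs.v *)
From HB Require Import structures.
From mathcomp Require Import all_boot all_order all_algebra.
From mathcomp Require Import all_classical all_reals all_analysis.
Set Implicit Arguments. Unset Strict Implicit. Unset Printing Implicit Defensive.
Import Order.TTheory GRing.Theory Num.Theory.
Import numFieldNormedType.Exports.
Local Open Scope classical_set_scope.
Local Open Scope ring_scope.

(* Euclidean norm on R^d = 'rV[R]_d (the library norm on matrices is the sup norm). *)
Definition enorm (R : realType) (d : nat) (v : 'rV[R]_d) : R :=
  Num.sqrt (\sum_(i < d) v 0 i ^+ 2).

Definition gradient (R : realType) (d : nat) (f : 'rV[R]_d -> R) (x : 'rV[R]_d)
  : 'rV[R]_d := \row_(i < d) derive f x (delta_mx 0 i).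

Definition grad1 (R : realType) (d : nat) (l : 'rV[R]_d -> 'rV[R]_d -> R)
  (theta vartheta : 'rV[R]_d) : 'rV[R]_d :=
  gradient (fun t => l t vartheta) theta.

(* Borel sigma-algebra on R^d: generated by products of Borel sets of R. *)
Definition rV_boxes (R : realType) (d : nat) : set (set 'rV[R]_d) :=
  [set B | exists (A : 'I_d -> set R),
      (forall i, measurable (A i)) /\ B = [set v : 'rV[R]_d | forall i, A i (v 0 i)]].

Definition rV_borel (R : realType) (d : nat) : set (set 'rV[R]_d) :=
  smallest (sigma_algebra setT) (@rV_boxes R d).

Definition rV_random_variable (dO : measure_display) (Omega : measurableType dO)
  (R : realType) (d : nat) (X : Omega -> 'rV[R]_d) : Prop :=
  forall B, rV_borel B -> measurable (X @^-1` B).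

Definition rV_mutually_independent (dO : measure_display) (Omega : measurableType dO)
  (R : realType) (d : nat) (P : probability Omega R) (I : eqType)
  (X : I -> Omega -> 'rV[R]_d) : Prop :=
  forall (s : seq I) (B : I -> set 'rV[R]_d),
    uniq s -> (forall i, rV_borel (B i)) ->
    P (\bigcap_(i in [set j | j \in s]) (X i @^-1` B i)) =
    (\prod_(i <- s) P (X i @^-1` B i))%E.

Definition rV_identically_distributed (dO : measure_display) (Omega : measurableType dO)
  (R : realType) (d : nat) (P : probability Omega R) (I : Type)
  (X : I -> Omega -> 'rV[R]_d) : Prop :=
  forall i j B, rV_borel B -> P (X i @^-1` B) = P (X j @^-1` B).

(* Main.v *)
Require Import Defs.
From HB Require Import structures.
From mathcomp Require Import all_boot all_order all_algebra.
From mathcomp Require Import all_classical all_reals all_analysis.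
From mathcomp Require Import ring lra.
Import Order.TTheory GRing.Theory Num.Theory.
Import numFieldNormedType.Exports.
Local Open Scope classical_set_scope.
Local Open Scope ring_scope.


Lemma enorm_ge0 (R : realType) (d : nat) (v : 'rV[R]_d) : 0 <= enorm v.
Proof. exact: sqrtr_ge0. Qed.

Lemma enorm_sq (R : realType) (d : nat) (v : 'rV[R]_d) : enorm v ^+ 2 = \sum_(i < d) v 0 i ^+ 2.
Proof. by rewrite /enorm sqr_sqrtr // sumr_ge0 // => i _; rewrite sqr_ge0. Qed.

Lemma enormZ (R : realType) (d : nat) (c : R) (v : 'rV[R]_d) : enorm (c *: v) = `|c| * enorm v.
Proof.
rewrite /enorm -sqrtr_sqr -sqrtrM ?sqr_ge0 //; congr Num.sqrt.
rewrite mulr_sumr; apply: eq_bigr => i _; by rewrite mxE exprMn.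
Qed.

Lemma enorm0 (R : realType) (d : nat) : enorm (0 : 'rV[R]_d) = 0.
Proof. by rewrite -(scale0r (0 : 'rV[R]_d)) enormZ normr0 mul0r. Qed.

Lemma enorm_eq0 (R : realType) (d : nat) (v : 'rV[R]_d) : enorm v = 0 -> v = 0.
Proof.
move=> h; have : enorm v ^+ 2 = 0 by rewrite h expr0n.
rewrite enorm_sq => /eqP; rewrite psumr_eq0; last by move=> i _; rewrite sqr_ge0.
move=> /allP H; apply/matrixP => i j; rewrite mxE.
have := H j (mem_index_enum j); rewrite /= sqrf_eq0 => /eqP.
by rewrite (ord1 i) => ->.
Qed.

Lemma enormD (R : realType) (d : nat) (u v : 'rV[R]_d) : enorm (u + v) <= enorm u + enorm v.
Proof.
have [->|u0] := eqVneq u 0; first by rewrite add0r enorm0 add0r.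
have [->|v0] := eqVneq v 0; first by rewrite addr0 enorm0 addr0.
set p := enorm u; set q := enorm v.
have pp : 0 < p.
  rewrite lt0r enorm_ge0 andbT; apply/eqP => /enorm_eq0; exact/eqP.
have qp : 0 < q.
  rewrite lt0r enorm_ge0 andbT; apply/eqP => /enorm_eq0; exact/eqP.
rewrite -(ler_pXn2r (n:=2)) ?nnegrE ?addr_ge0 ?enorm_ge0 //.
rewrite enorm_sq.
have key : forall i, (u + v) 0 i ^+ 2 <=
   (1 + q / p) * u 0 i ^+ 2 + (1 + p / q) * v 0 i ^+ 2.
  move=> i; rewrite mxE.
  set a := u 0 i; set b := v 0 i.
  have : 0 <= (q / p) * a ^+ 2 + (p / q) * b ^+ 2 - 2 * a * b.
    have -> : (q / p) * a ^+ 2 + (p / q) * b ^+ 2 - 2 * a * b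
       = (p * q)^-1 * (q * a - p * b) ^+ 2.
      by field; rewrite ?gt_eqF.
    by rewrite mulr_ge0 ?sqr_ge0 // invr_ge0 mulr_ge0 // ltW.
  rewrite subr_ge0 => H.
  rewrite sqrrD; nra.
apply: le_trans (ler_sum _ (fun i _ => key i)) _.
rewrite big_split /= -!mulr_sumr -!enorm_sq -/p -/q.
rewrite le_eqVlt; apply/orP; left; apply/eqP.
by field; rewrite ?gt_eqF.
Qed.

Lemma quot_id (R : realType) (d : nat) (kk : R) (a x : 'rV[R]_d) (i : 'I_d) (h : R) :
  h != 0 ->
  h^-1 *: ((fun t => kk / 2 * enorm (t - x) ^+ 2) \o shift a) (h *: delta_mx 0 i)
   - h^-1 *: (kk / 2 * enorm (a - x) ^+ 2) = kk * (a - x) 0 i + kk / 2 * h.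
Proof.
move=> h0; rewrite /= /enorm !sqr_sqrtr ?sumr_ge0 // => [|j _|j _]; last 2 first.
- by rewrite sqr_ge0.
- by rewrite sqr_ge0.
rewrite -scalerBr.
have -> : \sum_(i0 < d) (h *: delta_mx 0 i + a - x) 0 i0 ^+ 2
   = \sum_(i0 < d) (a - x) 0 i0 ^+ 2 + (2 * h * (a - x) 0 i + h ^+ 2).
  rewrite (bigD1 i) //= [in RHS](bigD1 i) //=.
  rewrite (eq_bigr (fun j => (a - x) 0 j ^+ 2)); last first.
    by move=> j ji; rewrite !mxE (negPf ji) andbF /= mulr0 add0r.
  set S' := \sum_(_ < _ | _) _.
  rewrite !mxE !eqxx /=; ring.
rewrite /GRing.scale /=.
set s := \sum_(_ < _) _.
by field.
Qed.

Lemma derive_l (R : realType) (d : nat) (kk : R) (a x : 'rV[R]_d) (i : 'I_d) :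
  derive (fun t => kk / 2 * enorm (t - x) ^+ 2) a (delta_mx 0 i) = kk * (a - x) 0 i.
Proof.
rewrite /derive; apply: cvg_lim => //.
have H : (fun h : R => kk * (a - x) 0 i + kk / 2 * h) @ 0^' --> kk * (a - x) 0 i.
  apply: cvg_within_filter.
  have H0 : (fun h : R => kk * (a - x) 0 i + kk / 2 * h) @ (0:R) --> kk * (a - x) 0 i + kk / 2 * 0.
    apply: cvgD; first exact: cvg_cst.
    apply: cvgMr; exact: cvg_id.
  by rewrite mulr0 addr0 in H0.
apply: cvg_trans H; apply: near_eq_cvg; near=> h.
rewrite -quot_id //=. 
  by rewrite scalerBr.
by near: h; exact: nbhs_dnbhs_neq.
Unshelve. all: by end_near.
Qed.
Arguments enorm_ge0 {R d}.
Arguments enorm_sq {R d}.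
Arguments enormZ {R d}.
Arguments enorm0 {R d}.
Arguments enorm_eq0 {R d}.
Arguments enormD {R d}.
Arguments derive_l {R d}.

Lemma enorm_sum (R : realType) (d : nat) (I : Type) (r : seq I) (F : I -> 'rV[R]_d) :
  enorm (\sum_(i <- r) F i) <= \sum_(i <- r) enorm (F i).
Proof.
elim: r => [|x r IH]; first by rewrite !big_nil enorm0.
rewrite !big_cons; apply: le_trans (enormD _ _) _; exact: lerD.
Qed.

Lemma cvg_sum_fun (R : realType) (T : Type) (F : set_system T) (FF : Filter F)
  (I : Type) (r : seq I) (f : I -> T -> R) (l : I -> R) :
  (forall i, f i @ F --> l i) ->
  (fun t => \sum_(i <- r) f i t) @ F --> \sum_(i <- r) l i.
Proof.
move=> H; elim: r => [|x r IH].
  rewrite big_nil; under eq_fun do rewrite big_nil; exact: cvg_cst.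
rewrite big_cons; under eq_fun do rewrite big_cons.
exact: cvgD.
Qed.

Lemma cvg_enorm (R : realType) (d : nat) (T : Type) (F : set_system T) (FF : Filter F)
  (u : T -> 'rV[R]_d) (l : 'rV[R]_d) :
  u @ F --> l -> (fun t => enorm (u t)) @ F --> enorm l.
Proof.
move=> H; rewrite /enorm.
apply: (@continuous_cvg _ _ _ F FF (fun t => \sum_(i < d) u t 0 i ^+ 2) Num.sqrt).
  exact: sqrt_continuous.
apply: cvg_sum_fun => i.
rewrite expr2; under eq_fun do rewrite expr2.
have Hc : (fun t => u t 0 i) @ F --> l 0 i.
  exact: (@continuous_cvg _ _ _ F FF u (fun M : 'rV[R]_d => M 0 i) l (@coord_continuous _ _ _ 0 i l) H).
exact: cvgM.
Qed.

Lemma geom_bound (R : realType) (r : R) (N : nat) : 0 <= r -> r < 1 ->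
  (\sum_(0 <= n < N) r ^+ n) * (1 - r) <= 1.
Proof.
move=> r0 r1.
have -> : (\sum_(0 <= n < N) r ^+ n) * (1 - r) = 1 - r ^+ N.
  elim: N => [|N IH]; first by rewrite big_geq // mul0r expr0 subrr.
  rewrite big_nat_recr //= mulrDl IH exprS; ring.
by rewrite lerBlDr lerDl exprn_ge0.
Qed.
Arguments enorm_sum {R d I}.
Arguments cvg_enorm {R d T F FF u l}.
Arguments geom_bound {R}.

Theorem lemma5p4 (R : realType) (d : nat) (kappa : R)
  (l : 'rV[R]_d -> 'rV[R]_d -> R)
  (dO : measure_display) (Omega : measurableType dO) (P : probability Omega R)
  (X : int -> int -> Omega -> 'rV[R]_d)
  (M : nat) (gamma : R) (Theta : nat -> Omega -> 'rV[R]_d) (k : int) :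
  (0 < d)%N ->
  0 < kappa ->
  (forall theta vartheta, l theta vartheta = kappa / 2 * enorm (theta - vartheta) ^+ 2) ->
  (forall n m, rV_random_variable (X n m)) ->
  rV_mutually_independent P (fun p : int * int => X p.1 p.2) ->
  rV_identically_distributed P (fun p : int * int => X p.1 p.2) ->
  (forall w, (ereal_sup [set (enorm (X p.1 p.2 w))%:E | p in [set: int * int]]
               < +oo)%E) ->
  (0 < M)%N ->
  0 < gamma < 2 / kappa ->
  (forall (n : nat) w, Theta n.+1 w =
      Theta n w - (gamma / M%:R) *:
        \sum_(1 <= m < M.+1) grad1 l (Theta n w) (X (Posz n.+1) (Posz m) w)) ->
  (forall w,
      (fun N : nat => \sum_(0 <= n < N)
          ((kappa * gamma * (1 - kappa * gamma) ^+ n / M%:R) *: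
             \sum_(0 <= i < M) X (- Posz n) (k + Posz i.+1) w))
        @ \oo --> Theta 0%N w) ->
  forall w,
    (ereal_sup (range (fun n : nat => (enorm (Theta n w))%:E)) <=
     (2 / (2 - kappa * gamma))%:E *
       ereal_sup [set (enorm (X p.1 p.2 w))%:E | p in [set: int * int]])%E.
Proof.
move=> _ k0 hl _ _ _ hsup M0 /andP[g0 g2] hrec hini w.
have hgrad : forall th x, grad1 l th x = kappa *: (th - x).
  move=> th x; rewrite /grad1 /gradient; apply/rowP => i; rewrite !mxE.
  have -> : (fun t => l t x) = (fun t => kappa / 2 * enorm (t - x) ^+ 2).
    by apply/funext => t; rewrite hl.
  by rewrite derive_l !mxE.
set a := kappa * gamma.
have a0 : 0 < a by rewrite mulr_gt0.
have a2 : a < 2.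
  by move: g2; rewrite /a ltr_pdivlMr // mulrC.
set SX := [set (enorm (X p.1 p.2 w))%:E | p in [set: int * int]].
have SX0 : (0 <= ereal_sup SX)%E.
  apply: le_trans (ereal_sup_ubound _); last by exists (0, 0).
  by rewrite lee_fin enorm_ge0.
have SXfin : ereal_sup SX \is a fin_num by rewrite ge0_fin_numE // hsup.
set S := fine (ereal_sup SX).
have SXE : ereal_sup SX = S%:E by rewrite fineK.
have S0 : 0 <= S by rewrite -lee_fin -SXE.
have hX : forall p q, enorm (X p q w) <= S.
  move=> p q; rewrite -lee_fin -SXE; apply: ereal_sup_ubound; by exists (p, q).
rewrite SXE -EFinM.
set r := `|1 - a|.
have r0 : 0 <= r by exact: normr_ge0.
have r1 : r < 1 by rewrite ltr_norml; apply/andP; split; lra.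
set B := 2 / (2 - a) * S.
have key : a * S <= (1 - r) * B.
  rewrite /B /r; have [ha|ha] := leP a 1.
    rewrite ger0_norm ?subr_ge0 // mulrA; apply: ler_wpM2r => //.
    rewrite -subr_ge0 -(@pmulr_rge0 _ (2 - a)) ?subr_gt0 //.
    have -> : (2 - a) * ((1 - (1 - a)) * (2 / (2 - a)) - a) = a * a.
      by field; rewrite subr_eq0 gt_eqF.
    by rewrite mulr_ge0 // ltW.
  rewrite ler0_norm; last by rewrite subr_le0 ltW.
  rewrite mulrA; apply: ler_wpM2r => //.
  have -> : (1 - - (1 - a)) * (2 / (2 - a)) = 2 by field; rewrite subr_eq0 gt_eqF.
  lra.
have B0 : 0 <= B by rewrite /B mulr_ge0 // divr_ge0 // subr_ge0 ltW.
have hsumX : forall (F : nat -> 'rV[R]_d) m n,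
    (forall i, enorm (F i) <= S) -> enorm (\sum_(m <= i < n) F i) <= S *+ (n - m).
  move=> F m n hF; apply: le_trans (enorm_sum _ _) _.
  rewrite -sumr_const_nat; exact: ler_sum.
have hTheta0 : enorm (Theta 0%N w) <= B.
  apply: (cvgr_to_le (cvg_enorm (hini w))).
  near=> N.
  apply: le_trans (enorm_sum _ _) _.
  apply: (@le_trans _ _ (\sum_(0 <= n < N) a * S * r ^+ n)).
    apply: ler_sum => n _; rewrite enormZ.
    apply: (@le_trans _ _ (`|a * (1 - a) ^+ n / M%:R| * (S *+ M))).
      apply: ler_wpM2l => //; have := hsumX (fun i => X (- Posz n) (k + Posz i.+1) w) 0%N M.
      by rewrite subn0; apply.
    rewrite !normrM normrV ?unitfE ?pnatr_eq0 -?lt0n // normr_nat (gtr0_norm k0) (gtr0_norm g0).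
    rewrite normrX -/r -[S *+ M]mulr_natr /a le_eqVlt; apply/orP; left; apply/eqP.
    by field; rewrite pnatr_eq0 -lt0n.
  rewrite -mulr_sumr.
  apply: (@le_trans _ _ ((1 - r) * B * \sum_(0 <= n < N) r ^+ n)).
    by apply: ler_wpM2r => //; apply: sumr_ge0 => n _; rewrite exprn_ge0.
  have h : 0 <= B * (1 - (\sum_(0 <= n < N) r ^+ n) * (1 - r)) by rewrite mulr_ge0 // subr_ge0 geom_bound.
  nra.
have Mn0 : (M%:R : R) != 0 by rewrite pnatr_eq0 -lt0n.
have hstep : forall n, Theta n.+1 w = (1 - a) *: Theta n w +
    (a / M%:R) *: \sum_(1 <= m < M.+1) X (Posz n.+1) (Posz m) w.
  move=> n; rewrite hrec; under eq_bigr do rewrite hgrad.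
  rewrite -scaler_sumr sumrB sumr_const_nat subSS subn0 -[(Theta n w *+ M)]scaler_nat scalerBr !scalerA.
  rewrite scalerBr !scalerA.
  have -> : gamma / M%:R * (kappa * M%:R) = a by rewrite /a; field.
  have -> : gamma / M%:R * kappa = a / M%:R by rewrite /a; field.
  by rewrite opprB addrCA addrC scalerBl scale1r.
have hall : forall n, enorm (Theta n w) <= B.
  elim => [|n IH]; first exact: hTheta0.
  rewrite hstep; apply: le_trans (enormD _ _) _.
  rewrite !enormZ -/r.
  have h1 : enorm (\sum_(1 <= m < M.+1) X (Posz n.+1) (Posz m) w) <= S *+ M.
    have := hsumX (fun m => X (Posz n.+1) (Posz m) w) 1%N M.+1.
    by rewrite subSS subn0; apply.
  have h2 : `|a / M%:R| * enorm (\sum_(1 <= m < M.+1) X (Posz n.+1) (Posz m) w) <= a * S.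
    rewrite ger0_norm; last by rewrite divr_ge0 // ltW.
    apply: le_trans (ler_wpM2l _ h1) _; first by rewrite divr_ge0 // ltW.
    rewrite -mulr_natr le_eqVlt; apply/orP; left; apply/eqP; by field.
  have h3 : r * enorm (Theta n w) <= r * B by apply: ler_wpM2l.
  lra.
apply: ge_ereal_sup => _ [n _ <-]; rewrite lee_fin; exact: hall.
Unshelve. all: by end_near.
Qed.
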